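(* The rational function \[ \psi_{32}(z)=\frac{\frac{1246}{384649}z^3+\frac{2289}{34970}z^2+\frac{119}{269}z+1}{-\frac{4}{327}z^3+\frac{8}{65}z^2-\frac{150}{269}z+1} \] belongs to $\Pi_{3/3,2}$ and satisfies $R(\psi_{32})=x_0\approx 6.778307398$, where $x_0$ is the smallest real root of \[ 43572620x^3-880461561x^2+5950520030x-13451175530=0. \] In particular $R_{3/3,2}>6$.
   Context: A real rational function $\psi$ is always considered in lowest terms, as a smooth function on $\mathbb{R}$ minus its finitely many poles. It is absolutely monotonic at $x\in\mathbb{R}$ if $x$ is not a pole and $\psi^{(k)}(x)\ge 0$ for all integers $k\ge 0$. The radius of absolute monotonicity is $R(\psi)=\sup\big(\{r\in[0,\infty): \psi \text{ is absolutely monotonic at each point of } [-r,0]\}\cup\{0\}\big)\in[0,+\infty]$. For $m,n,p\in\mathbb{N}$, $\Pi_{m/n,p}$ denotes the set of rational functions $\psi=P/Q$ with $P,Q$ real polynomials, $\deg P\le m$, $Q\not\equiv 0$, $\deg Q\le n$, such that $\psi(z)-e^z=O(z^{p+1})$ as $z\to 0$. Finally, $R_{m/n,p}=\sup\{R(\psi):\psi\in\Pi_{m/n,p}\}$. *)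

(* Defs.v *)
From Stdlib Require Import Reals Lra List.
Open Scope R_scope.

(* Real polynomials as coefficient lists, lowest degree first. *)
Definition peval (l : list R) (x : R) : R :=
  fold_right (fun c acc => c + x * acc) 0 l.

Definition deg_le (l : list R) (m : nat) : Prop := (length l <= S m)%nat.

Definition poly_nonzero (l : list R) : Prop := exists c, In c l /\ c <> 0.

(* P/Q and P1/Q1 are the same rational function: P*Q1 = P1*Q as polynomials
   (equality of polynomial functions over R = equality of polynomials). *)
Definition rat_equiv (P Q P1 Q1 : list R) : Prop :=
  forall z, peval P z * peval Q1 z = peval P1 z * peval Q z.

(* x is not a pole of the rational function P/Q (taken in lowest terms):
   some representative of the same rational function has nonzero denominator at x. *)
Definition nonpole (P Q : list R) (x : R) : Prop :=
  exists P1 Q1, rat_equiv P Q P1 Q1 /\ peval Q1 x <> 0.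

Definition rat_val (P Q : list R) (x v : R) : Prop :=
  exists P1 Q1, rat_equiv P Q P1 Q1 /\ peval Q1 x <> 0 /\ v = peval P1 x / peval Q1 x.

(* psi = P/Q is absolutely monotonic at x: x is not a pole and all derivatives
   psi^(k)(x) >= 0.  d k is the k-th derivative of psi on the (open) set of non-poles. *)
Definition abs_monotonic_at (P Q : list R) (x : R) : Prop :=
  nonpole P Q x /\
  exists d : nat -> R -> R,
    (forall y, nonpole P Q y -> rat_val P Q y (d O y)) /\
    (forall k y, nonpole P Q y -> derivable_pt_lim (d k) y (d (S k) y)) /\
    (forall k, 0 <= d k x).

(* The set whose supremum is R(psi). *)
Definition radius_set (P Q : list R) (r : R) : Prop :=
  r = 0 \/ (0 <= r /\ forall x, -r <= x <= 0 -> abs_monotonic_at P Q x).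

Definition in_Pi (m n p : nat) (P Q : list R) : Prop :=
  deg_le P m /\ deg_le Q n /\ poly_nonzero Q /\
  exists delta C, 0 < delta /\ 0 <= C /\
    forall z, Rabs z < delta ->
      exists v, rat_val P Q z v /\ Rabs (v - exp z) <= C * Rabs z ^ (S p).

(* R_{m/n,p} > a, i.e. sup { R(psi) : psi in Pi_{m/n,p} } > a, i.e.
   some psi in Pi_{m/n,p} has some r > a in its radius set. *)
Definition Rmnp_gt (m n p : nat) (a : R) : Prop :=
  exists P Q, in_Pi m n p P Q /\ exists r, a < r /\ radius_set P Q r.

Definition P32 : list R :=
  1 :: (119 / 269) :: (2289 / 34970) :: (1246 / 384649) :: nil.
Definition Q32 : list R :=
  1 :: (- (150 / 269)) :: (8 / 65) :: (- (4 / 327)) :: nil.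

Definition cubic32 (x : R) : R :=
  43572620 * x ^ 3 - 880461561 * x ^ 2 + 5950520030 * x - 13451175530.

(* Main.v *)
Require Import Defs.
From Stdlib Require Import Reals Lra Lia Psatz.
From Coquelicot Require Import Coquelicot.
Open Scope R_scope.


Definition Pf (y : R) := 1 + 119/269*y + 2289/34970*y^2 + 1246/384649*y^3.
Definition Qf (y : R) := 1 - 150/269*y + 8/65*y^2 - 4/327*y^3.
Definition P1f (y : R) := 119/269 + 2*(2289/34970)*y + 3*(1246/384649)*y^2.
Definition P2f (y : R) := 2*(2289/34970) + 6*(1246/384649)*y.
Definition P3f : R := 6*(1246/384649).
Definition Q1f (y : R) := - (150/269) + 2*(8/65)*y - 3*(4/327)*y^2.
Definition Q2f (y : R) := 2*(8/65) - 6*(4/327)*y.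
Definition Q3f : R := - 6*(4/327).

Lemma peval_P y : peval P32 y = Pf y.
Proof. unfold peval, P32, Pf; simpl; ring. Qed.
Lemma peval_Q y : peval Q32 y = Qf y.
Proof. unfold peval, Q32, Qf; simpl; ring. Qed.

Lemma cubic_P x : cubic32 x = - 13451175530 * Pf (-x).
Proof. unfold cubic32, Pf; field. Qed.

Lemma P1_pos y : 0 < P1f y.
Proof. unfold P1f.
  assert (H := pow2_ge_0 (y + (2*(2289/34970))/(2*(3*(1246/384649))))).
  assert (E : 119/269 + 2*(2289/34970)*y + 3*(1246/384649)*y^2 =
     3*(1246/384649) * (y + (2*(2289/34970))/(2*(3*(1246/384649))))^2
     + (119/269 - (2*(2289/34970))^2/(4*(3*(1246/384649))))) by field.
  rewrite E. nra. Qed.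

Lemma P_strict u v : u < v -> Pf u < Pf v.
Proof.
  intros H. unfold Pf.
  assert (E: 1 + 119 / 269 * v + 2289 / 34970 * v ^ 2 + 1246 / 384649 * v ^ 3 -
   (1 + 119 / 269 * u + 2289 / 34970 * u ^ 2 + 1246 / 384649 * u ^ 3)
   = (v - u) * (119/269 + 2289/34970*(u+v) + 1246/384649*(u*u+u*v+v*v))) by field.
  assert (0 < 119/269 + 2289/34970*(u+v) + 1246/384649*(u*u+u*v+v*v)).
  { assert (u*u+u*v+v*v = 3/4*(u+v)^2 + 1/4*(u-v)^2) by field.
    pose proof (P1_pos ((u+v)/2)). unfold P1f in H1. nra. }
  nra.
Qed.

Lemma Q_pos_nonpos y : y <= 0 -> 1 <= Qf y.
Proof. intros. unfold Qf. nra. Qed.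

Lemma P_pos_nonneg y : 0 <= y -> 1 <= Pf y.
Proof. intros. unfold Pf. nra. Qed.

Lemma Q_nonzero_neg y : y < 1 -> Qf y > 0.
Proof. intros. unfold Qf. destruct (Rle_dec y 0). nra. nra. Qed.

Lemma Q_root_ex : exists p, Qf p = 0 /\ 3.714171442588 <= p <= 3.714171442589.
Proof.
  assert (C : continuity (fun y => - Qf y)) by (unfold Qf; reg).
  destruct (IVT (fun y => - Qf y) 3.714171442588 3.714171442589 C) as [z [Hz1 Hz2]].
  - lra.
  - unfold Qf; lra.
  - unfold Qf; lra.
  - exists z; split; [lra | exact Hz1].
Qed.

Lemma x0_ex : exists x0, cubic32 x0 = 0 /\ 6.778307398562 <= x0 <= 6.778307398563.
Proof.
  assert (C : continuity cubic32) by (unfold cubic32; reg).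
  destruct (IVT cubic32 6.778307398562 6.778307398563 C) as [z [Hz1 Hz2]].
  - lra.
  - unfold cubic32; lra.
  - unfold cubic32; lra.
  - exists z; split; [exact Hz2 | exact Hz1].
Qed.

Lemma dmul f g y f' g' : derivable_pt_lim f y f' -> derivable_pt_lim g y g' ->
  derivable_pt_lim (fun z => f z * g z) y (f' * g y + f y * g').
Proof. intros; apply (derivable_pt_lim_mult f g); auto. Qed.
Lemma dplus f g y f' g' : derivable_pt_lim f y f' -> derivable_pt_lim g y g' ->
  derivable_pt_lim (fun z => f z + g z) y (f' + g').
Proof. intros; apply (derivable_pt_lim_plus f g); auto. Qed.
Lemma dminus f g y f' g' : derivable_pt_lim f y f' -> derivable_pt_lim g y g' ->
  derivable_pt_lim (fun z => f z - g z) y (f' - g').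
Proof. intros; apply (derivable_pt_lim_minus f g); auto. Qed.
Lemma dconst c y : derivable_pt_lim (fun _ => c) y 0.
Proof. apply derivable_pt_lim_const. Qed.
Lemma dval f y l l' : derivable_pt_lim f y l -> l = l' -> derivable_pt_lim f y l'.
Proof. intros; subst; auto. Qed.

Section Seq.
Variables a b : R -> R.
Fixpoint XY (n : nat) (y : R) : R * R :=
  match n with
  | O => (1, 0)
  | S n => let q := XY n y in (a y * fst q - b y * snd q, b y * fst q + a y * snd q)
  end.
Definition SX n y := fst (XY n y).
Definition SY n y := snd (XY n y).

Lemma SX_S n y : SX (S n) y = a y * SX n y - b y * SY n y.
Proof. reflexivity. Qed.
Lemma SY_S n y : SY (S n) y = b y * SX n y + a y * SY n y.
Proof. reflexivity. Qed.

Lemma S_deriv y : derivable_pt_lim a y (a y ^ 2 - b y ^ 2) ->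
  derivable_pt_lim b y (2 * a y * b y) ->
  forall n, derivable_pt_lim (SX n) y (INR n * SX (S n) y) /\
            derivable_pt_lim (SY n) y (INR n * SY (S n) y).
Proof.
  intros Ha Hb n. induction n as [|n [IX IY]].
  - split.
    + apply dval with 0; [|unfold SX, SY; simpl; ring].
      apply derivable_pt_lim_ext with (f := fun _ => 1); [intros; reflexivity | apply dconst].
    + apply dval with 0; [|unfold SX, SY; simpl; ring].
      apply derivable_pt_lim_ext with (f := fun _ => 0); [intros; reflexivity | apply dconst].
  - split.
    + apply derivable_pt_lim_ext with (f := fun z => a z * SX n z - b z * SY n z).
      { intros; rewrite SX_S; reflexivity. }
      eapply dval. apply dminus; apply dmul; eauto.
      repeat rewrite ?SX_S, ?SY_S; rewrite S_INR. ring.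
    + apply derivable_pt_lim_ext with (f := fun z => b z * SX n z + a z * SY n z).
      { intros; rewrite SY_S; reflexivity. }
      eapply dval. apply dplus; apply dmul; eauto.
      repeat rewrite ?SX_S, ?SY_S; rewrite S_INR. ring.
Qed.

Lemma S_norm y n : SX n y ^ 2 + SY n y ^ 2 = (a y ^ 2 + b y ^ 2) ^ n.
Proof.
  induction n. unfold SX, SY; simpl fst; simpl snd. simpl pow. ring.
  replace ((a y ^ 2 + b y ^ 2) ^ S n) with ((a y ^ 2 + b y ^ 2) * (a y ^ 2 + b y ^ 2) ^ n) by reflexivity.
  rewrite SX_S, SY_S, <- IHn. ring.
Qed.
End Seq.

Lemma le_div a b c : 0 < c -> a*c <= b -> a <= b/c.
Proof. intros. apply Rmult_le_reg_r with c; auto. unfold Rdiv; rewrite Rmult_assoc, Rinv_l; lra. Qed.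
Lemma div_le a b c : 0 < c -> b <= a*c -> b/c <= a.
Proof. intros. apply Rmult_le_reg_r with c; auto. unfold Rdiv; rewrite Rmult_assoc, Rinv_l; lra. Qed.
Lemma prod_b a1 a2 b1 b2 x y : 0 <= a1 -> a1 <= x <= a2 -> 0 <= b1 -> b1 <= y <= b2 ->
  a1*b1 <= x*y <= a2*b2.
Proof. intros. split; apply Rmult_le_compat; lra. Qed.

Section Main.
Variable p : R.
Hypothesis Hp : Qf p = 0.
Hypothesis Hpb : 3.714171442588 <= p <= 3.714171442589.

Definition al := (654/65 - p)/2.
Definition G := 327/(4*p) - al^2.
Definition gam := sqrt G.
Definition qf y := (y - al)^2 + G.
Definition A := Pf p / (4/327 * qf p).
Definition c0 := -(1246/384649)*(327/4).
Definition r2 := 2289/34970 - c0*(8/65) - 4/327*A.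
Definition r1 := 119/269 + c0*(150/269) + 8/327*A*al.
Definition m1 := -(327/4)*r2.
Definition m0 := -(327/4)*(r1 + r2*p).

Lemma al_b : 3.17368350 <= al <= 3.17368351.
Proof. unfold al; lra. Qed.
Lemma G_b : 11.9380255 <= G <= 11.9380256.
Proof.
  pose proof al_b.
  assert (E: G = (327/4 - al^2*p)/p) by (unfold G; field; lra).
  assert (3.17368350^2 <= al^2 <= 3.17368351^2) by (split; apply pow_incr; lra).
  assert (44.33987346 <= 327/4 - al^2*p <= 44.33987371) by (split; nra).
  rewrite E. split; [apply le_div|apply div_le]; nra.
Qed.
Lemma G_pos : 0 < G.
Proof. pose proof G_b; lra. Qed.
Lemma qf_pos y : 0 < qf y.
Proof. unfold qf; pose proof G_pos; pose proof (pow2_ge_0 (y - al)); lra. Qed.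
Lemma gam_pos : 0 < gam.
Proof. unfold gam; apply sqrt_lt_R0, G_pos. Qed.
Lemma gam2 : gam ^ 2 = G.
Proof. unfold gam; simpl; rewrite Rmult_1_r; apply sqrt_sqrt; pose proof G_pos; lra. Qed.

Lemma qp_b : 12.2301527 <= qf p <= 12.2301529.
Proof. pose proof G_b; unfold qf.
  assert (0.5404879331 <= p - al <= 0.5404879332) by (unfold al; lra).
  assert (0.5404879331^2 <= (p-al)^2 <= 0.5404879332^2) by (split; apply pow_incr; lra).
  lra. Qed.
Lemma Pp_b : 3.71201734 <= Pf p <= 3.71201735.
Proof. unfold Pf.
  assert (3.714171442588^2 <= p^2 <= 3.714171442589^2) by (split; apply pow_incr; lra).
  assert (3.714171442588^3 <= p^3 <= 3.714171442589^3) by (split; apply pow_incr; lra).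
  lra. Qed.
Lemma A_b : 24.812234 <= A <= 24.8122347.
Proof.
  pose proof qp_b; pose proof Pp_b. unfold A.
  split; [apply le_div|apply div_le]; nra.
Qed.

Lemma r2_b : -0.2054649577 <= r2 <= -0.2054649491.
Proof. pose proof A_b. unfold r2, c0. lra. Qed.
Lemma r1_b : 2.2212252876 <= r1 <= 2.2212253481.
Proof. pose proof A_b; pose proof al_b. unfold r1, c0.
  assert (24.812234*3.17368350 <= A*al <= 24.8122347*3.17368351) by (apply prod_b; lra). lra. Qed.
Lemma m1_b : 16.7967595 <= m1 <= 16.7967603.
Proof. pose proof r2_b. unfold m1. lra. Qed.
Lemma m0_b : -119.1991275 <= m0 <= -119.1991198.
Proof. pose proof r2_b; pose proof r1_b. unfold m0.
  assert (0.2054649491*3.714171442588 <= (-r2)*p <= 0.2054649577*3.714171442589) by (apply prod_b; lra). lra. Qed.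
Lemma w_b : -65.891530 <= m0 + m1*al <= -65.891518.
Proof. pose proof m0_b; pose proof m1_b; pose proof al_b.
  assert (16.7967595*3.17368350 <= m1*al <= 16.7967603*3.17368351) by (apply prod_b; lra). lra. Qed.

Definition T := 9921/10000.
Lemma tail_const : T^7 * (m1^2 + (m0 + m1*al)^2/G) <= A^2.
Proof.
  pose proof m1_b; pose proof w_b; pose proof G_b; pose proof A_b.
  assert (m1^2 <= 16.7967603^2) by (apply pow_incr; lra).
  assert ((m0 + m1*al)^2 <= 65.891530^2).
  { replace ((m0 + m1*al)^2) with ((-(m0+m1*al))^2) by ring. apply pow_incr; lra. }
  assert ((m0 + m1*al)^2/G <= 363.69) by (apply div_le; lra).
  assert (T^7 <= 0.946) by (unfold T; lra).
  assert (0 <= T^7) by (unfold T; lra).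
  assert (24.812234^2 <= A^2) by (apply pow_incr; lra).
  nra.
Qed.

Lemma p_pos : 0 < p.
Proof. lra. Qed.

Lemma Q_fact y : Qf y = 4/327*(p-y)*qf y.
Proof.
  assert (E : Qf y - 4/327*(p-y)*qf y = y * Qf p / p).
  { unfold Qf, qf, G, al. field. lra. }
  rewrite Hp in E. lra.
Qed.

Lemma A_def : 4/327*A*qf p = Pf p.
Proof. unfold A. field; pose proof (qf_pos p); lra. Qed.

Lemma R_id z : Pf z - c0*Qf z - 4/327*A*qf z = 4/327*(p-z)*(m1*z+m0).
Proof.
  assert (E : Pf z - c0*Qf z - 4/327*A*qf z - 4/327*(p-z)*(m1*z+m0)
             = Pf p - c0*Qf p - 4/327*A*qf p).
  { unfold m1, m0, r1, r2, qf, c0, Pf, Qf. field. }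
  rewrite Hp, A_def in E. lra.
Qed.

Lemma pf_id y : y <> p -> Pf y / Qf y = c0 + A/(p-y) + (m1*y+m0)/qf y.
Proof.
  intros Hy. pose proof (R_id y). pose proof (qf_pos y).
  assert (Pf y = c0*Qf y + 4/327*A*qf y + 4/327*(p-y)*(m1*y+m0)) by lra.
  rewrite H1, Q_fact. field. split; [lra|]. intro; apply Hy; lra.
Qed.

Definition Br := - m1 / 2.
Definition Bi := (m0 + m1*al) / (2*gam).
Definition ra (y : R) := / (p - y).
Definition rb (y : R) := 0.
Definition ca (y : R) := (al - y) / qf y.
Definition cb (y : R) := - gam / qf y.

Definition dd (k : nat) (y : R) : R :=
  (match k with O => c0 | S _ => 0 end) +
  INR (Factorial.fact k) * (A * SX ra rb (S k) y +
                  2 * (Br * SX ca cb (S k) y - Bi * SY ca cb (S k) y)).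

Lemma ra_der y : y <> p -> derivable_pt_lim ra y (ra y ^ 2 - rb y ^ 2).
Proof.
  intros Hy. apply is_derive_Reals. unfold ra, rb.
  auto_derive. intro; apply Hy; lra. field. intro; apply Hy; lra.
Qed.
Lemma rb_der y : derivable_pt_lim rb y (2 * ra y * rb y).
Proof. unfold rb. apply dval with 0. apply dconst. ring. Qed.

Lemma ca_der y : derivable_pt_lim ca y (ca y ^ 2 - cb y ^ 2).
Proof.
  apply is_derive_Reals. unfold ca, cb.
  pose proof (qf_pos y). pose proof gam2.
  assert (Hq : forall z, qf z = (z - al)^2 + G) by reflexivity.
  apply is_derive_ext with (f := fun z => (al - z) / ((z - al)^2 + G)).
  { intros; rewrite Hq; reflexivity. }
  rewrite Hq in *. auto_derive. lra.
  rewrite <- H0. field. lra.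
Qed.
Lemma cb_der y : derivable_pt_lim cb y (2 * ca y * cb y).
Proof.
  apply is_derive_Reals. unfold ca, cb.
  pose proof (qf_pos y).
  assert (Hq : forall z, qf z = (z - al)^2 + G) by reflexivity.
  apply is_derive_ext with (f := fun z => - gam / ((z - al)^2 + G)).
  { intros; rewrite Hq; reflexivity. }
  rewrite Hq in *. auto_derive. lra.
  field. lra.
Qed.

Lemma dd_der k y : y <> p -> derivable_pt_lim (dd k) y (dd (S k) y).
Proof.
  intros Hy.
  destruct (S_deriv ra rb y (ra_der y Hy) (rb_der y) (S k)) as [HR _].
  destruct (S_deriv ca cb y (ca_der y) (cb_der y) (S k)) as [HX HY].
  unfold dd.
  eapply dval.
  - apply dplus. apply dconst.
    apply dmul. apply dconst.
    apply dplus. apply dmul. apply dconst. exact HR.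
    apply dmul. apply dconst.
    apply dminus; apply dmul; try apply dconst; eauto.
  - rewrite fact_simpl, mult_INR. destruct k; simpl INR; ring.
Qed.

Lemma dd0_val y : y <> p -> dd 0 y = Pf y / Qf y.
Proof.
  intros Hy. rewrite pf_id by auto. unfold dd. simpl INR.
  repeat rewrite ?SX_S, ?SY_S. unfold SX, SY; simpl fst; simpl snd.
  unfold Br, Bi, ra, rb, ca, cb. pose proof gam_pos. pose proof (qf_pos y).
  field; repeat split; try lra; intro; apply Hy; lra.
Qed.

Lemma tau_b y : -6.778307398563 <= y <= 0 -> (p-y)^2 <= T * qf y.
Proof.
  intros Hy. pose proof al_b; pose proof G_b.
  set (a := -6.778307398563).
  assert (Ha : 0 <= T * qf a - (p - a)^2).
  { unfold qf, a, T.
    assert (9.95199090 <= al + 6.778307398563 <= 9.95199091) by (unfold al; lra).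
    assert (10.49247884 <= p - -6.778307398563 <= 10.49247885) by lra.
    replace ((-6.778307398563 - al)^2) with ((al + 6.778307398563)^2) by nra.
    assert (9.95199090^2 <= (al + 6.778307398563)^2) by (apply pow_incr; lra).
    assert ((p - -6.778307398563)^2 <= 10.49247885^2) by (apply pow_incr; lra).
    lra. }
  assert (Hb0 : 0 <= T * qf 0 - (p - 0)^2).
  { unfold qf, T.
    assert (E: (0 - al)^2 + G = 327/(4*p)) by (unfold G; field; lra). rewrite E.
    assert (327/(4*p) >= 22) by (apply Rle_ge, le_div; lra).
    assert ((p-0)^2 <= 3.8^2) by (apply pow_incr; lra). lra. }
  assert (E : T * qf y - (p - y)^2 =
     ((0 - y) * (T * qf a - (p - a)^2) + (y - a) * (T * qf 0 - (p - 0)^2)) / (0 - a)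
     + (1 - T) * (y - a) * (0 - y)).
  { unfold qf, T. field. unfold a; lra. }
  assert (0 <= ((0 - y) * (T * qf a - (p - a)^2) + (y - a) * (T * qf 0 - (p - 0)^2)) / (0 - a)).
  { apply Rdiv_le_0_compat; [|unfold a; lra].
    assert (0 <= (0-y)) by lra. assert (0 <= y - a) by (unfold a; lra). nra. }
  assert (0 <= (1 - T) * (y - a) * (0 - y)).
  { unfold T, a. assert (0 <= (y - -6.778307398563) * (0 - y)) by nra. nra. }
  lra.
Qed.

Lemma SXr n y : SX ra rb n y = ra y ^ n /\ SY ra rb n y = 0.
Proof.
  induction n as [|n [IX IY]]. unfold SX, SY; simpl; split; ring.
  rewrite SX_S, SY_S, IX, IY. unfold rb. simpl. split; ring.
Qed.

Lemma cnorm y : ca y ^ 2 + cb y ^ 2 = / qf y.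
Proof.
  unfold ca, cb. pose proof (qf_pos y). pose proof gam2.
  assert (qf y = (y - al)^2 + gam^2) by (unfold qf; rewrite H0; reflexivity).
  rewrite H1. field. rewrite <- H1; lra.
Qed.

Lemma tail k y : (6 <= k)%nat -> -6.778307398563 <= y <= 0 -> 0 <= dd k y.
Proof.
  intros Hk Hy.
  destruct k as [|k']; [lia|].
  set (n := S (S k')).
  assert (Hn : (7 <= n)%nat) by (unfold n; lia).
  unfold dd. fold n.
  destruct (SXr n y) as [HX _]. rewrite HX.
  set (X := SX ca cb n y). set (Y := SY ca cb n y).
  assert (HXY : X^2 + Y^2 = (/ qf y)^n) by (unfold X, Y; rewrite S_norm, cnorm; reflexivity).
  set (K := m1^2 + (m0 + m1*al)^2/G).
  assert (HK : (2 * (Br * X - Bi * Y))^2 <= K * (X^2+Y^2)).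
  { assert (E : K = 4 * (Br^2 + Bi^2)).
    { unfold K, Br, Bi. pose proof gam_pos. rewrite <- gam2. field. lra. }
    rewrite E. assert (0 <= (Br * Y + Bi * X)^2) by apply pow2_ge_0.
    assert (E2: 4 * (Br ^ 2 + Bi ^ 2) * (X ^ 2 + Y ^ 2) = (2 * (Br * X - Bi * Y))^2 + 4*(Br * Y + Bi * X)^2) by ring.
    lra. }
  pose proof (qf_pos y) as Hq.
  assert (Hpy : 0 < p - y) by lra.
  assert (Hra : ra y = / (p - y)) by reflexivity.
  set (u := A * ra y ^ n).
  assert (Hu : 0 < u).
  { unfold u. pose proof A_b. apply Rmult_lt_0_compat; [lra|]. apply pow_lt. rewrite Hra. apply Rinv_0_lt_compat; lra. }
  assert (HKpos : 0 <= K).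
  { unfold K. pose proof G_pos. assert (0 <= (m0 + m1*al)^2/G) by (apply Rdiv_le_0_compat; [apply pow2_ge_0|lra]).
    pose proof (pow2_ge_0 m1). lra. }
  assert (Ht : ((p-y)^2)^n <= T^7 * qf y ^ n).
  { apply Rle_trans with ((T * qf y)^n).
    - apply pow_incr. split; [apply pow2_ge_0| apply tau_b; lra].
    - rewrite Rpow_mult_distr. apply Rmult_le_compat_r. apply pow_le; lra.
      replace n with (7 + (n - 7))%nat by lia. rewrite pow_add.
      assert (T^(n-7) <= 1^(n-7)) by (apply pow_incr; unfold T; lra). rewrite pow1 in H.
      assert (0 <= T^7) by (apply pow_le; unfold T; lra). nra. }
  assert (HA : K * ((p-y)^2)^n <= A^2 * qf y ^ n).
  { pose proof tail_const. fold K in H.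
    assert (0 <= qf y ^ n) by (apply pow_le; lra).
    apply Rle_trans with (K * (T^7 * qf y ^ n)). apply Rmult_le_compat_l; auto.
    nra. }
  assert (Hv : (2 * (Br * X - Bi * Y))^2 <= u^2).
  { apply Rle_trans with (K * (X^2+Y^2)); auto. rewrite HXY.
    unfold u. rewrite Hra.
    set (r := / (p - y)). set (s := / qf y).
    assert (e1 : (p-y)^2 * r^2 = 1) by (unfold r; field; lra).
    assert (e2 : qf y * s = 1) by (unfold s; field; lra).
    assert (Hs : 0 <= s^n * (r^2)^n).
    { apply Rmult_le_pos; apply pow_le. unfold s; left; apply Rinv_0_lt_compat; lra. apply pow2_ge_0. }
    assert (Hm : K*((p-y)^2)^n * (s^n*(r^2)^n) <= A^2*qf y^n * (s^n*(r^2)^n))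
      by (apply Rmult_le_compat_r; auto).
    replace (K*((p-y)^2)^n * (s^n*(r^2)^n)) with (K * s^n * ((p-y)^2*r^2)^n) in Hm
      by (rewrite Rpow_mult_distr; ring).
    replace (A^2*qf y^n*(s^n*(r^2)^n)) with (A^2*(r^2)^n*(qf y*s)^n) in Hm
      by (rewrite Rpow_mult_distr; ring).
    rewrite e1, e2, !pow1 in Hm.
    replace ((A * r ^ n) ^ 2) with (A^2*(r^2)^n).
    lra.
    rewrite Rpow_mult_distr, <- !pow_mult, Nat.mul_comm. reflexivity. }
  assert (0 <= u + 2 * (Br * X - Bi * Y)) by nra.
  assert (0 < INR (Factorial.fact (S k'))) by apply INR_fact_lt_0.
  nra.
Qed.

Lemma dQ y : derivable_pt_lim Qf y (Q1f y).
Proof. apply is_derive_Reals. unfold Qf, Q1f. auto_derive; auto. field. Qed.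
Lemma dQ1 y : derivable_pt_lim Q1f y (Q2f y).
Proof. apply is_derive_Reals. unfold Q1f, Q2f. auto_derive; auto. field. Qed.
Lemma dQ2 y : derivable_pt_lim Q2f y Q3f.
Proof. apply is_derive_Reals. unfold Q2f, Q3f. auto_derive; auto. field. Qed.
Lemma dP y : derivable_pt_lim Pf y (P1f y).
Proof. apply is_derive_Reals. unfold Pf, P1f. auto_derive; auto. field. Qed.
Lemma dP1 y : derivable_pt_lim P1f y (P2f y).
Proof. apply is_derive_Reals. unfold P1f, P2f. auto_derive; auto. field. Qed.
Lemma dP2 y : derivable_pt_lim P2f y P3f.
Proof. apply is_derive_Reals. unfold P2f, P3f. auto_derive; auto. field. Qed.

Definition h0 y := Qf y * dd 0 y - Pf y.
Definition h1 y := Qf y * dd 1 y + Q1f y * dd 0 y - P1f y.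
Definition h2 y := Qf y * dd 2 y + 2*Q1f y*dd 1 y + Q2f y*dd 0 y - P2f y.
Definition h3 y := Qf y*dd 3 y + 3*Q1f y*dd 2 y + 3*Q2f y*dd 1 y + Q3f*dd 0 y - P3f.
Definition h4 y := Qf y*dd 4 y + 4*Q1f y*dd 3 y + 6*Q2f y*dd 2 y + 4*Q3f*dd 1 y.
Definition h5 y := Qf y*dd 5 y + 5*Q1f y*dd 4 y + 10*Q2f y*dd 3 y + 10*Q3f*dd 2 y.

Lemma zero_prop f g : (forall y, -8 < y < 1 -> f y = 0) ->
  (forall y, -8 < y < 1 -> derivable_pt_lim f y (g y)) -> forall y, -8 < y < 1 -> g y = 0.
Proof.
  intros Hf Hd y Hy.
  assert (D : derivable_pt_lim (fun _ => 0) y (g y)).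
  { apply derivable_pt_lim_locally_ext with (f := f) (a := -8) (b := 1); auto.
    }
  eapply uniqueness_limite. exact D. apply dconst.
Qed.

Lemma I_ne y : -8 < y < 1 -> y <> p.
Proof. intros; lra. Qed.

Ltac dd_tac := repeat (first [ apply dQ | apply dQ1 | apply dQ2 | apply dP | apply dP1 | apply dP2
   | apply dd_der; lra | apply dconst | apply dminus | apply dplus | apply dmul ]).

Lemma h0z y : -8 < y < 1 -> h0 y = 0.
Proof.
  intros. unfold h0. rewrite dd0_val by (apply I_ne; auto).
  field. pose proof (Q_nonzero_neg y); lra.
Qed.
Lemma h1z : forall y, -8 < y < 1 -> h1 y = 0.
Proof.
  apply zero_prop with h0. exact h0z.
  intros y Hy. unfold h0. eapply dval. dd_tac. unfold h1. ring.
Qed.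
Lemma h2z : forall y, -8 < y < 1 -> h2 y = 0.
Proof.
  apply zero_prop with h1. exact h1z.
  intros y Hy. unfold h1. eapply dval. dd_tac. unfold h2. ring.
Qed.
Lemma h3z : forall y, -8 < y < 1 -> h3 y = 0.
Proof.
  apply zero_prop with h2. exact h2z.
  intros y Hy. unfold h2. eapply dval. dd_tac. unfold h3. ring.
Qed.
Lemma h4z : forall y, -8 < y < 1 -> h4 y = 0.
Proof.
  apply zero_prop with h3. exact h3z.
  intros y Hy. unfold h3. eapply dval. dd_tac. unfold h4. unfold P3f, Q3f. ring.
Qed.
Lemma h5z : forall y, -8 < y < 1 -> h5 y = 0.
Proof.
  apply zero_prop with h4. exact h4z.
  intros y Hy. unfold h4. eapply dval. dd_tac. unfold h5. ring.
Qed.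

Lemma small_vals x0 : cubic32 x0 = 0 -> 6.778307398562 <= x0 <= 6.778307398563 ->
  0 <= dd 1 (-x0) /\ 0 <= dd 2 (-x0) /\ 0 <= dd 3 (-x0) /\ 0 <= dd 4 (-x0) /\ 0 <= dd 5 (-x0)
  /\ dd 0 (-x0) = 0.
Proof.
  intros Hc Hx.
  assert (HP : Pf (-x0) = 0) by (rewrite cubic_P in Hc; lra).
  assert (HI : -8 < -x0 < 1) by lra.
  assert (W2 : 6.778307398562^2 <= x0^2 <= 6.778307398563^2) by (split; apply pow_incr; lra).
  assert (W3 : 6.778307398562^3 <= x0^3 <= 6.778307398563^3) by (split; apply pow_incr; lra).
  assert (W4 : 6.778307398562^4 <= x0^4 <= 6.778307398563^4) by (split; apply pow_incr; lra).
  assert (BQ : 14.244 <= Qf (-x0) <= 14.245) by (unfold Qf; split; nra).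
  assert (BP1 : 0.0015116 <= P1f (-x0) <= 0.0015117) by (unfold P1f; split; nra).
  assert (BP2 : -0.00083031 <= P2f (-x0) <= -0.00083030) by (unfold P2f; split; nra).
  assert (BQ1 : -3.9123 <= Q1f (-x0) <= -3.9121) by (unfold Q1f; split; nra).
  assert (BQ2 : 0.74364 <= Q2f (-x0) <= 0.74365) by (unfold Q2f; split; nra).
  assert (BN2 : 4.5e-7 <= P2f (-x0) * Qf (-x0) - 2 * Q1f (-x0) * P1f (-x0) <= 4.6e-7).
  { unfold P2f, Qf, Q1f, P1f. split; nra. }
  pose proof (h1z (-x0) HI) as E1. pose proof (h2z (-x0) HI) as E2.
  pose proof (h3z (-x0) HI) as E3. pose proof (h4z (-x0) HI) as E4.
  pose proof (h5z (-x0) HI) as E5.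
  unfold h1, h2, h3, h4, h5 in *.
  assert (D0 : dd 0 (-x0) = 0) by (rewrite dd0_val, HP by lra; unfold Rdiv; ring).
  rewrite D0 in *.
  set (q := Qf (-x0)) in *. set (a1 := Q1f (-x0)) in *. set (a2 := Q2f (-x0)) in *.
  set (b1 := P1f (-x0)) in *. set (b2 := P2f (-x0)) in *.
  set (d1 := dd 1 (-x0)) in *. set (d2 := dd 2 (-x0)) in *. set (d3 := dd 3 (-x0)) in *.
  set (d4 := dd 4 (-x0)) in *. set (d5 := dd 5 (-x0)) in *.
  assert (F1 : q * d1 = b1) by lra.
  assert (B1 : 1.0611e-4 <= d1 <= 1.0613e-4) by (split; nra).
  assert (F2 : q * q * d2 = b2 * q - 2 * a1 * b1) by (rewrite <- F1; nra).
  assert (B2 : 0 <= d2 <= 3e-9) by (split; nra).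
  assert (F3 : q * d3 = P3f - 3*a1*d2 - 3*a2*d1) by (unfold Q3f in E3; lra).
  assert (B3 : 1.347e-3 <= d3 <= 1.349e-3).
  { unfold P3f in F3. split; nra. }
  assert (F4 : q * d4 = - (4*a1*d3 + 6*a2*d2 + 4*Q3f*d1)) by lra.
  assert (B4 : 1.481e-3 <= d4 <= 1.485e-3).
  { unfold Q3f in F4.
    assert (3.9121*1.347e-3 <= (-a1)*d3 <= 3.9123*1.349e-3) by (apply prod_b; lra).
    assert (0.74364*0 <= a2*d2 <= 0.74365*3e-9) by (apply prod_b; lra).
    assert (0.0211095 <= q*d4 <= 0.021142) by lra.
    split; nra. }
  assert (F5 : q * d5 = - (5*a1*d4 + 10*a2*d3 + 10*Q3f*d2)) by lra.
  assert (B5 : 0 <= d5).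
  { unfold Q3f in F5.
    assert (3.9121*1.481e-3 <= (-a1)*d4 <= 3.9123*1.485e-3) by (apply prod_b; lra).
    assert (0.74364*1.347e-3 <= a2*d3 <= 0.74365*1.349e-3) by (apply prod_b; lra).
    assert (0 <= q*d5) by lra. nra. }
  repeat split; try lra.
Qed.

Lemma mono_step a k : a <= 0 -> (forall c, a <= c <= 0 -> 0 <= dd (S k) c) -> 0 <= dd k a ->
  forall x, a <= x <= 0 -> 0 <= dd k x.
Proof.
  intros Ha Hd H0 x Hx.
  destruct (Req_dec a x) as [<-|Hne]; auto.
  destruct (MVT_cor2 (dd k) (dd (S k)) a x) as [c [Hc1 Hc2]]; [lra| |].
  - intros c Hc. apply dd_der. lra.
  - assert (0 <= dd (S k) c) by (apply Hd; lra). nra.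
Qed.

Lemma all_pos x0 : cubic32 x0 = 0 -> 6.778307398562 <= x0 <= 6.778307398563 ->
  forall k x, -x0 <= x <= 0 -> 0 <= dd k x.
Proof.
  intros Hc Hx.
  destruct (small_vals x0 Hc Hx) as [S1 [S2 [S3 [S4 [S5 S0]]]]].
  assert (T6 : forall k x, (6 <= k)%nat -> -x0 <= x <= 0 -> 0 <= dd k x).
  { intros k x Hk Hx'. apply tail; auto; lra. }
  assert (P5 : forall x, -x0 <= x <= 0 -> 0 <= dd 5 x).
  { apply mono_step; [lra| |auto]. intros; apply T6; auto. }
  assert (P4 : forall x, -x0 <= x <= 0 -> 0 <= dd 4 x) by (apply mono_step; [lra|auto|auto]).
  assert (P3 : forall x, -x0 <= x <= 0 -> 0 <= dd 3 x) by (apply mono_step; [lra|auto|auto]).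
  assert (P2 : forall x, -x0 <= x <= 0 -> 0 <= dd 2 x) by (apply mono_step; [lra|auto|auto]).
  assert (P1 : forall x, -x0 <= x <= 0 -> 0 <= dd 1 x) by (apply mono_step; [lra|auto|auto]).
  assert (P0 : forall x, -x0 <= x <= 0 -> 0 <= dd 0 x) by (apply mono_step; [lra|auto|lra]).
  intros k x Hx'.
  destruct k as [|[|[|[|[|[|k]]]]]]; auto. apply T6; auto; lia.
Qed.

End Main.

Lemma grow g g' M n : g 0 = 0 -> (forall c, derivable_pt_lim g c (g' c)) ->
  (forall c, Rabs c <= 1 -> Rabs (g' c) <= M * Rabs c ^ n) -> 0 <= M ->
  forall z, Rabs z <= 1 -> Rabs (g z) <= M * Rabs z ^ (S n).
Proof.
  intros H0 Hd Hb HM z Hz.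
  destruct (Rtotal_order z 0) as [Hlt|[Heq|Hgt]].
  - destruct (MVT_cor2 g g' z 0 Hlt) as [c [E Hc]]; [intros; apply Hd|].
    rewrite H0 in E.
    assert (Rabs c <= 1) by (unfold Rabs in *; destruct (Rcase_abs c); destruct (Rcase_abs z); lra).
    pose proof (Hb c H).
    assert (Rabs c ^ n <= Rabs z ^ n) by (apply pow_incr; split; [apply Rabs_pos|]; unfold Rabs; destruct (Rcase_abs c); destruct (Rcase_abs z); lra).
    replace (g z) with (- (g' c * (0 - z))) by lra.
    rewrite Rabs_Ropp, Rabs_mult. simpl pow.
    replace (Rabs (0 - z)) with (Rabs z) by (rewrite <- Rabs_Ropp; f_equal; ring).
    assert (0 <= Rabs (g' c)) by apply Rabs_pos.
    assert (0 <= Rabs z) by apply Rabs_pos.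
    assert (0 <= Rabs c ^ n) by (apply pow_le, Rabs_pos).
    apply Rle_trans with (M * Rabs c ^ n * Rabs z). apply Rmult_le_compat_r; auto.
    assert (M*Rabs c^n <= M*Rabs z^n) by (apply Rmult_le_compat_l; auto). nra.
  - subst. rewrite H0, Rabs_R0. simpl. rewrite Rmult_0_l. lra.
  - destruct (MVT_cor2 g g' 0 z Hgt) as [c [E Hc]]; [intros; apply Hd|].
    rewrite H0 in E.
    assert (Rabs c <= 1) by (unfold Rabs in *; destruct (Rcase_abs c); destruct (Rcase_abs z); lra).
    pose proof (Hb c H).
    assert (Rabs c ^ n <= Rabs z ^ n) by (apply pow_incr; split; [apply Rabs_pos|]; unfold Rabs; destruct (Rcase_abs c); destruct (Rcase_abs z); lra).
    replace (g z) with (g' c * (z - 0)) by lra.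
    rewrite Rabs_mult. simpl pow.
    replace (z - 0) with z by ring.
    assert (0 <= Rabs (g' c)) by apply Rabs_pos.
    assert (0 <= Rabs z) by apply Rabs_pos.
    assert (0 <= Rabs c ^ n) by (apply pow_le, Rabs_pos).
    apply Rle_trans with (M * Rabs c ^ n * Rabs z). apply Rmult_le_compat_r; auto.
    assert (M*Rabs c^n <= M*Rabs z^n) by (apply Rmult_le_compat_l; auto). nra.
Qed.

Lemma exp_b1 z : Rabs z <= 1 -> Rabs (exp z - 1) <= 3 * Rabs z ^ 1.
Proof.
  apply (grow (fun z => exp z - 1) exp 3 0).
  - rewrite exp_0; ring.
  - intros c. eapply dval. apply dminus. apply derivable_pt_lim_exp. apply dconst. ring.
  - intros c Hc. simpl. rewrite Rmult_1_r. rewrite Rabs_right by (left; apply exp_pos).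
    assert (c <= 1) by (unfold Rabs in Hc; destruct (Rcase_abs c); lra).
    destruct (Req_dec c 1). subst; apply exp_le_3.
    pose proof (exp_increasing c 1). pose proof exp_le_3. lra.
  - lra.
Qed.
Lemma exp_b2 z : Rabs z <= 1 -> Rabs (exp z - 1 - z) <= 3 * Rabs z ^ 2.
Proof.
  apply (grow (fun z => exp z - 1 - z) (fun z => exp z - 1) 3 1).
  - rewrite exp_0; ring.
  - intros c. eapply dval. apply dminus. apply dminus. apply derivable_pt_lim_exp. apply dconst.
    apply derivable_pt_lim_id. ring.
  - intros; apply exp_b1; auto.
  - lra.
Qed.
Lemma exp_b3 z : Rabs z <= 1 -> Rabs (exp z - 1 - z - z^2/2) <= 3 * Rabs z ^ 3.
Proof.
  apply (grow (fun z => exp z - 1 - z - z^2/2) (fun z => exp z - 1 - z) 3 2).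
  - rewrite exp_0; field.
  - intros c. apply is_derive_Reals. auto_derive; [exact I| field].
  - intros; apply exp_b2; auto.
  - lra.
Qed.

Lemma inPi : in_Pi 3 3 2 P32 Q32.
Proof.
  unfold in_Pi. split; [unfold deg_le; simpl; lia|].
  split; [unfold deg_le; simpl; lia|].
  split; [exists 1; split; [left; reflexivity| lra]|].
  exists (1/2), 4. split; [lra|]. split; [lra|].
  intros z Hz.
  assert (Hz' : -1/2 < z < 1/2) by (unfold Rabs in Hz; destruct (Rcase_abs z); lra).
  assert (HQ : 1/2 <= Qf z) by (unfold Qf; nra).
  exists (Pf z / Qf z). split.
  { exists P32, Q32. split; [intro; ring|]. rewrite peval_Q, peval_P. split; [lra|reflexivity]. }
  set (S := 376526021659/2199267199155 - 1048/21255 * z + 2/327 * z^2).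
  assert (HS : 0 <= S <= 0.23) by (unfold S; split; nra).
  assert (E : Pf z / Qf z - exp z = z^3 * (S / Qf z) - (exp z - 1 - z - z^2/2)).
  { unfold S, Pf, Qf. unfold Qf in HQ. field. lra. }
  rewrite E.
  assert (Hz1 : Rabs z <= 1) by lra.
  pose proof (exp_b3 z Hz1).
  eapply Rle_trans. apply Rabs_triang. rewrite Rabs_Ropp.
  rewrite Rabs_mult, <- RPow_abs.
  assert (0 <= S / Qf z <= 0.46).
  { split. apply Rdiv_le_0_compat; lra. apply div_le; lra. }
  rewrite (Rabs_right (S / Qf z)) by lra.
  assert (0 <= Rabs z ^ 3) by (apply pow_le, Rabs_pos).
  simpl pow in *. nra.
Qed.

Lemma nonpole_Q y : nonpole P32 Q32 y -> Qf y <> 0.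
Proof.
  intros [P1 [Q1 [Heq HQ1]]] HQ0.
  assert (Hy : 0 < y).
  { destruct (Rle_dec y 0) as [H|H]; [pose proof (Q_pos_nonpos y H); lra | lra]. }
  pose proof (P_pos_nonneg y (Rlt_le _ _ Hy)).
  specialize (Heq y). rewrite peval_P, peval_Q, HQ0, Rmult_0_r in Heq.
  apply HQ1. apply Rmult_eq_reg_l with (Pf y); [|lra]. lra.
Qed.

Lemma Qnz_nonpole y : Qf y <> 0 -> nonpole P32 Q32 y.
Proof. intros H. exists P32, Q32. split; [intro; ring|]. rewrite peval_Q; auto. Qed.

Lemma abs_mono p (Hp : Qf p = 0) (Hpb : 3.714171442588 <= p <= 3.714171442589) x0 :
  cubic32 x0 = 0 -> 6.778307398562 <= x0 <= 6.778307398563 ->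
  forall x, -x0 <= x <= 0 -> abs_monotonic_at P32 Q32 x.
Proof.
  intros Hc Hx x Hx'.
  split. { apply Qnz_nonpole. pose proof (Q_pos_nonpos x). lra. }
  exists (dd p). split; [|split].
  - intros y Hy. pose proof (nonpole_Q y Hy).
    assert (y <> p) by (intro; subst; contradiction).
    exists P32, Q32. split; [intro; ring|]. rewrite peval_Q, peval_P. split; auto.
    apply (dd0_val p); auto.
  - intros k y Hy. pose proof (nonpole_Q y Hy).
    assert (y <> p) by (intro; subst; contradiction).
    apply (dd_der p); auto.
  - intros k. apply (all_pos p Hp Hpb x0); auto.
Qed.

Lemma not_abs_mono x : Pf x < 0 -> 0 < Qf x -> ~ abs_monotonic_at P32 Q32 x.
Proof.
  intros HP HQ [Hn [d [Hv [_ Hpos]]]].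
  destruct (Hv x Hn) as [P1 [Q1 [Heq [HQ1 Hd]]]].
  specialize (Hpos 0%nat). rewrite Hd in Hpos.
  specialize (Heq x). rewrite peval_P, peval_Q in Heq.
  assert (E : peval P1 x / peval Q1 x = Pf x / Qf x).
  { field_simplify_eq; auto; lra. }
  rewrite E in Hpos.
  assert (Pf x / Qf x < 0).
  { unfold Rdiv. apply Rmult_neg_pos; auto. apply Rinv_0_lt_compat; auto. }
  lra.
Qed.

Theorem mainTheorem16 :
  in_Pi 3 3 2 P32 Q32 /\
  (exists x0 : R,
      cubic32 x0 = 0 /\ (forall y : R, cubic32 y = 0 -> x0 <= y) /\
      is_lub (radius_set P32 Q32) x0) /\
  Rmnp_gt 3 3 2 6.
Proof.
  destruct Q_root_ex as [p [Hp Hpb]].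
  destruct x0_ex as [x0 [Hc Hx]].
  assert (HP0 : Pf (-x0) = 0) by (rewrite cubic_P in Hc; lra).
  assert (Hrad : radius_set P32 Q32 x0).
  { right. split; [lra|]. intros x Hx'. apply (abs_mono p Hp Hpb x0); auto. }
  split; [exact inPi|]. split.
  - exists x0. split; auto. split.
    + intros y Hy. rewrite cubic_P in Hy.
      destruct (Rle_dec x0 y) as [H|H]; auto.
      assert (Pf (-x0) < Pf (-y)) by (apply P_strict; lra). lra.
    + split.
      * intros r [Hr | [Hr0 Hall]]; [lra|].
        destruct (Rle_dec r x0) as [H|H]; auto. exfalso.
        apply (not_abs_mono (-r)).
        -- assert (Pf (-r) < Pf (-x0)) by (apply P_strict; lra). lra.
        -- pose proof (Q_pos_nonpos (-r)). lra.
        -- apply Hall. lra.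
      * intros b Hb. apply Hb. exact Hrad.
  - exists P32, Q32. split; [exact inPi|]. exists x0. split; [lra|exact Hrad].
Qed.
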